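(* Let $n_1,n_2$ be positive integers with $n_1\ge n_2$. Let $C_1$ be a collection of $2^{3n_1}$ squares of the form $[i4^{-n_1},(i+1)4^{-n_1}]\times[j4^{-n_1},(j+1)4^{-n_1}]$ ($0\le i,j<4^{n_1}$) such that each column $[j4^{-n_1},(j+1)4^{-n_1}]\times[0,1]$, $j=0,\dots,4^{n_1}-1$, contains exactly $2^{n_1}$ squares of $C_1$. Then one can choose, inside each square of $C_1$, exactly $2^{n_2}$ of its $4^{2n_2}$ grid subsquares of side length $4^{-(n_1+n_2)}$, in such a way that every column $[j4^{-(n_1+n_2)},(j+1)4^{-(n_1+n_2)}]\times[0,1]$, $j=0,\dots,4^{n_1+n_2}-1$, contains at least one chosen subsquare. *)

(* Defs.v *)
From mathcomp Require Import all_boot.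
Set Implicit Arguments. Unset Strict Implicit. Unset Printing Implicit Defensive.

(* Grid squares of level n: a square [i 4^-n,(i+1)4^-n] x [j 4^-n,(j+1)4^-n]
   is encoded by the pair (i, j) : 'I_(4^n) * 'I_(4^n); i is the horizontal
   (x) index, so the square lies in column i. *)
Definition square (n : nat) := ('I_(4 ^ n) * 'I_(4 ^ n))%type.

Definition column (n : nat) (s : square n) : 'I_(4 ^ n) := s.1.

Definition subsquare_of (n1 n2 : nat) (t : square (n1 + n2)) (s : square n1) : bool :=
  ((t.1 : nat) %/ 4 ^ n2 == s.1) && ((t.2 : nat) %/ 4 ^ n2 == s.2).
Arguments subsquare_of : clear implicits.

(* Main.v *)
Require Import Defs.
From mathcomp Require Import all_boot.
From mathcomp Require Import zify.

Lemma pos4 n : 0 < 4 ^ n.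
Proof. by rewrite expn_gt0. Qed.

Definition ordm n x : 'I_(4 ^ n) := Ordinal (ltn_pmod x (pos4 n)).

Definition rk n1 n2 (C1 : {set square n1}) (s : square n1) : nat :=
  index s (enum [set s' in C1 | column s' == column s]) %% 2 ^ n2.
Arguments rk : clear implicits.

Definition ff n1 n2 (C1 : {set square n1}) (s : square n1) (b : 'I_(2 ^ n2))
  : square (n1 + n2) :=
  (ordm (n1 + n2) (s.1 * 4 ^ n2 + rk n1 n2 C1 s * 2 ^ n2 + b),
   ordm (n1 + n2) (s.2 * 4 ^ n2)).
Arguments ff : clear implicits.

Lemma bnd a X Y r b : a < Y -> r < X -> b < X -> a * (X * X) + r * X + b < Y * (X * X).
Proof. nia. Qed.

Lemma four n : 4 ^ n = 2 ^ n * 2 ^ n.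
Proof. by rewrite -expnMn. Qed.

Lemma ff1 n1 n2 C1 s b :
  val (ff n1 n2 C1 s b).1 = s.1 * 4 ^ n2 + rk n1 n2 C1 s * 2 ^ n2 + b.
Proof.
rewrite /= modn_small // expnD.
have h1 : val s.1 < 4 ^ n1 := ltn_ord _.
have h2 : rk n1 n2 C1 s < 2 ^ n2 by rewrite ltn_pmod // expn_gt0.
move: (val s.1) h1 (rk n1 n2 C1 s) h2 (ltn_ord b) => x h1 r h2; move: (val b) => c h3.
rewrite [4 ^ n2]four; exact: bnd.
Qed.

Lemma ff2 n1 n2 C1 s b :
  val (ff n1 n2 C1 s b).2 = s.2 * 4 ^ n2.
Proof.
rewrite /= modn_small // expnD.
have h1 : val s.2 < 4 ^ n1 := ltn_ord _.
move: (val s.2) h1 => x h1.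
by rewrite ltn_pmul2r ?pos4.
Qed.

Lemma ff_sub n1 n2 C1 s b : subsquare_of n1 n2 (ff n1 n2 C1 s b) s.
Proof.
rewrite /subsquare_of ff1 ff2 mulnK ?pos4 // eqxx andbT.
rewrite -addnA divnMDl ?pos4 // divn_small ?addn0 //.
have h2 : rk n1 n2 C1 s < 2 ^ n2 by rewrite ltn_pmod // expn_gt0.
move: (rk n1 n2 C1 s) h2 (ltn_ord b) => r h2; move: (val b) => c h3.
rewrite [4 ^ n2]four; nia.
Qed.

Theorem lemma3p1 (n1 n2 : nat) (hn2 : 0 < n2) (hn12 : n2 <= n1)
  (C1 : {set square n1})
  (hcard : #|C1| = 2 ^ (3 * n1))
  (hcol : forall j : 'I_(4 ^ n1), #|[set s in C1 | column s == j]| = 2 ^ n1) :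
  exists D : {set square (n1 + n2)},
    (forall t, t \in D -> exists2 s, s \in C1 & subsquare_of n1 n2 t s) /\
    (forall s, s \in C1 -> #|[set t in D | subsquare_of n1 n2 t s]| = 2 ^ n2) /\
    (forall j : 'I_(4 ^ (n1 + n2)), exists2 t, t \in D & column t == j).
Proof.
exists [set ff n1 n2 C1 s b | s in C1, b in 'I_(2 ^ n2)].
split; [|split].
- move=> t /imset2P [s b sC _ ->]; exists s => //; exact: ff_sub.
- move=> s sC.
  have -> : [set t in [set ff n1 n2 C1 s b | s in C1, b in 'I_(2 ^ n2)] |
              subsquare_of n1 n2 t s] = [set ff n1 n2 C1 s b | b in 'I_(2 ^ n2)].
    apply/setP => t; rewrite !inE; apply/andP/imsetP.
      case=> /imset2P [s' b s'C _ ->] sub; exists b => //.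
      suff es : s' = s by rewrite es.
      move: sub (ff_sub n1 n2 C1 s' b); rewrite /subsquare_of.
      move=> /andP [/eqP e1 /eqP e2] /andP [/eqP e3 /eqP e4].
      rewrite [s']surjective_pairing [s]surjective_pairing; congr pair; apply: val_inj.
        by rewrite /= -e3 e1.
      by rewrite /= -e4 e2.
    case=> b _ ->; split; last exact: ff_sub.
    by apply/imset2P; exists s b.
  rewrite card_imset ?card_ord // => b c /(f_equal (fun t => val t.1)).
  by rewrite !ff1 => /addnI /val_inj.
- move=> J.
  have hj : val J %/ 4 ^ n2 < 4 ^ n1.
    rewrite ltn_divLR ?pos4 // -expnD. idtac.  exact: ltn_ord.
  pose j : 'I_(4 ^ n1) := Ordinal hj.
  pose k := val J %% 4 ^ n2.
  have ha : k %/ 2 ^ n2 < 2 ^ n2.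
    by rewrite ltn_divLR ?expn_gt0 // -four ltn_pmod ?pos4.
  have hb : k %% 2 ^ n2 < 2 ^ n2 by rewrite ltn_pmod ?expn_gt0.
  pose S := [set s in C1 | column s == j].
  have hsz : k %/ 2 ^ n2 < size (enum S).
    rewrite -cardE hcol; apply: (leq_trans ha); by rewrite leq_exp2l.
  pose s := nth (j, j) (enum S) (k %/ 2 ^ n2).
  have sS : s \in S by rewrite -mem_enum mem_nth.
  move: (sS); rewrite inE => /andP [sC /eqP cs].
  exists (ff n1 n2 C1 s (Ordinal hb)); first by apply/imset2P; exists s (Ordinal hb).
  apply/eqP/val_inj; rewrite /column ff1 /=.
  have -> : rk n1 n2 C1 s = k %/ 2 ^ n2.
    rewrite /rk cs -/S /s index_uniq ?enum_uniq // modn_small //.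
  move: cs; rewrite /column => ->; rewrite /= -addnA -divn_eq.
  by rewrite /k -divn_eq.
Qed.
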